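(* Let $p\geq 2$ be a prime. For $j\in\{2,4,8\}$ consider the substitutions (j=2): $f=\frac{1}{x_2}$, $g=x_2(-\alpha_2+x_2y_2)$; (j=4): $f=x_4(\alpha_1+x_4y_4)$, $g=\frac{1}{x_4}$; (j=8): $f=\frac{1}{x_8}$, $g=\frac{1}{x_8(1-tx_8+(t^2+1-\alpha_1-\alpha_2)x_8^2+y_8x_8^3)}$. Then for each $j$, after the substitution, $$\mathcal{I}_p=P_j(y_j)+x_jR_j(x_j,y_j),$$ where $P_j\in\mathbb{F}_p[y_j,\alpha_1,\alpha_2,t]$ is a polynomial and $R_j\in\mathbb{F}_p(x_j,y_j,\alpha_1,\alpha_2,t)$ is a rational function whose reduced denominator is not divisible by $x_j$. In particular, for any field $\mathbf{k}$ of characteristic $p$ and any choice of parameters $t,\alpha_1,\alpha_2\in\mathbf{k}$, $\mathcal{I}_p$ defines a regular map $\mathcal{I}_p:\mathcal{X}\to\mathbb{A}^1_{\mathbf{k}}$ on the initial value space $\mathcal{X}$.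
   Context: Define the $2\times2$ matrix polynomial in $z$ $$A(z)=\begin{bmatrix}w&0\\0&1\end{bmatrix}\begin{bmatrix}1&0\\ f-tfg-tz&1\end{bmatrix}\begin{bmatrix}g&1\\ z+\alpha_2&0\end{bmatrix}\begin{bmatrix}-f&1\\ z&0\end{bmatrix}\begin{bmatrix}tz-g+tfg&1\\ z-\alpha_1&0\end{bmatrix}\begin{bmatrix}w^{-1}&0\\0&1\end{bmatrix}$$ and $\mathcal{I}_p:=\operatorname{Tr}[A(p-1)\cdots A(1)A(0)]$ computed in characteristic $p$, an element of $\mathbb{F}_p[f,g,\alpha_1,\alpha_2,t]$ independent of $w$. Initial value space: fix a field $\mathbf{k}$ and $t,\alpha_1,\alpha_2\in\mathbf{k}$. Start from $\mathbb{P}^1_{\mathbf{k}}\times\mathbb{P}^1_{\mathbf{k}}$ with coordinates $(f,g)$, covered by charts $(f,g),(F,g),(f,G),(F,G)$ with $F=1/f$, $G=1/g$. Convention: blowing up a point $b_i:(x,y)=(x_*,y_* )$ in a chart $(x,y)$ gives exceptional line $E_i$ covered by charts $(u_i,v_i)$ with $x=x_*+u_iv_i,\ y=y_*+v_i$ and $(U_i,V_i)$ with $x=x_*+U_i,\ y=y_*+U_iV_i$. Blow up successively the eight points $b_1:(F,g)=(0,0)$; $b_2:(U_1,V_1)=(0,-\alpha_2)$; $b_3:(f,G)=(0,0)$; $b_4:(u_3,v_3)=(\alpha_1,0)$; $b_5:(F,G)=(0,0)$; $b_6:(U_5,V_5)=(0,1)$; $b_7:(U_6,V_6)=(0,-t)$;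 $b_8:(U_7,V_7)=(0,t^2+\alpha_1+\alpha_2-1)$, obtaining a surface $\widehat{\mathcal{X}}$. Let $D\subseteq\widehat{\mathcal{X}}$ be the strict transform (under the blow-ups of $b_2,b_4,b_8$) of the total transform of the curve $\{f=\infty\}\cup\{g=\infty\}$ under the other blow-ups. The initial value space is $\mathcal{X}:=\widehat{\mathcal{X}}\setminus D$. The parts of $E_2,E_4,E_8$ away from $D$ are covered by the coordinates $(x_2,y_2)=(U_2,V_2)$, $(x_4,y_4)=(v_4,u_4)$, $(x_8,y_8)=(U_8,V_8)$ given by the substitutions in the claim, where $E_j$ has local equation $x_j=0$. *)

(* Defs.v *)
From HB Require Import structures.
From mathcomp Require Import all_boot all_order all_algebra.
From mathcomp Require Import fraction.
From mathcomp Require Import mpoly.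

Set Implicit Arguments.
Unset Strict Implicit.
Unset Printing Implicit Defensive.

Import GRing.Theory.
Local Open Scope ring_scope.

(* The 2x2 matrix A(z) of the paper, with entries in a field K
   (w is the conjugating parameter, assumed nonzero in the theorem). *)
Definition Amat (K : fieldType) (w f g a1 a2 t z : K) : 'M[K]_2 :=
  let D  : 'M[K]_2 := \matrix_(i, j) (if i == j then (if i == 0 then w else 1) else 0) in
  let Di : 'M[K]_2 := \matrix_(i, j) (if i == j then (if i == 0 then w^-1 else 1) else 0) in
  let L  : 'M[K]_2 := \matrix_(i, j)
           (if (i == 1) && (j == 0) then f - t * f * g - t * z
            else if i == j then 1 else 0) in
  let M1 : 'M[K]_2 := \matrix_(i, j)
           (if i == 0 then (if j == 0 then g else 1)
            else (if j == 0 then z + a2 else 0)) in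
  let M2 : 'M[K]_2 := \matrix_(i, j)
           (if i == 0 then (if j == 0 then - f else 1)
            else (if j == 0 then z else 0)) in
  let M3 : 'M[K]_2 := \matrix_(i, j)
           (if i == 0 then (if j == 0 then t * z - g + t * f * g else 1)
            else (if j == 0 then z - a1 else 0)) in
  D * L * M1 * M2 * M3 * Di.

(* I_p evaluated at (f,g,alpha_1,alpha_2,t) in a field K (of characteristic p
   in all uses below): Tr [A(p-1) ... A(1) A(0)], with z ranging over k%:R. *)
Definition Ip (K : fieldType) (p : nat) (w f g a1 a2 t : K) : K :=
  \tr (\prod_(i < p) Amat w f g a1 a2 t ((p.-1 - i)%N%:R)).

Inductive exc_line := E2 | E4 | E8.

Definition chart_subst (K : fieldType) (j : exc_line) (x y a1 a2 t : K) : K * K :=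
  match j with
  | E2 => (x^-1, x * (- a2 + x * y))
  | E4 => (x * (a1 + x * y), x^-1)
  | E8 => (x^-1,
           (x * (1 - t * x + (t ^+ 2 + 1 - a1 - a2) * x ^+ 2 + y * x ^+ 3))^-1)
  end.

Notation "x %:F" := (@FracField.tofrac _ x) : ring_scope.

Notation ratfun F n := {fraction {mpoly F[n]}}.

Definition has_chart_decomp (F : fieldType) (n : nat) (ix : 'I_n)
    (v : ratfun F n) : Prop :=
  exists (P N D : {mpoly F[n]}),
    (forall m, m \in msupp P -> m ix = 0%N) /\
    ~ (exists Q : {mpoly F[n]}, D = 'X_ix * Q) /\
    v = P%:F + ('X_ix)%:F * (N%:F / D%:F).

(* Main.v *)
Require Import Defs.
From HB Require Import structures.
From mathcomp Require Import all_boot all_order all_algebra.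
From mathcomp Require Import fraction.
From mathcomp Require Import mpoly.
From mathcomp Require Import ring.
Import GRing.Theory.
Local Open Scope ring_scope.
Lemma fld1 (K : fieldType) (a b c d : K) : 1 + c * d != 0 ->
  (a + c * b) / (1 + c * d) = a + c * ((b - a * d) / (1 + c * d)).
Proof. by move=> nz; field. Qed.

Lemma fld2 (K : fieldType) (a b c d : K) : c != 0 -> d != 0 ->
  a / c + b / d = (a * d + b * c) / (c * d).
Proof. by move=> nc nd; field; rewrite nc nd. Qed.

Lemma fld3 (K : fieldType) (a b c d : K) : c != 0 -> d != 0 ->
  a / c * (b / d) = (a * b) / (c * d).
Proof. by move=> nc nd; field; rewrite nc nd. Qed.

Section Decomp.
Variables (F : fieldType) (n : nat) (ix : 'I_n).

Lemma mpoly_split (T : {mpoly F[n]}) :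
  exists P Q : {mpoly F[n]}, (forall m, m \in msupp P -> m ix = 0%N) /\ T = P + 'X_ix * Q.
Proof.
elim/mpolyind: T => [|c m T _ _ [P [Q [HP ->]]]].
  by exists 0, 0; rewrite msupp0 mulr0 addr0.
have [m0|mpos] := eqVneq (m ix) 0%N.
  exists (c *: 'X_[m] + P), Q; split; last by rewrite addrA.
  move=> m' /msuppD_le; rewrite mem_cat => /orP [/msuppZ_le|/HP //].
  by rewrite msuppX inE => /eqP ->.
have le : (U_(ix) <= m)%MM.
  apply/mnm_lepP => j; rewrite mnm1E; case: eqP => [<-|_] //=.
  by rewrite lt0n.
exists P, (c *: 'X_[m - U_(ix)] + Q); split => //.
rewrite -{1}(submK le) mpolyXD mulrDr -scalerAr mulrC addrCA.
by [].
Qed.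

Variable H1 : {mpoly F[n]}.
Let hP : {mpoly F[n]} := 1 + 'X_ix * H1.
Local Notation K := {fraction {mpoly F[n]}}.

Definition good (v : K) := exists (T : {mpoly F[n]}) (m : nat), v = T%:F / (hP ^+ m)%:F.

Lemma hPm_eval m : meval (fun _ => 0) (hP ^+ m) = 1.
Proof. by rewrite rmorphXn /= mevalD mevalM mevalXU meval1 mul0r addr0 expr1n. Qed.

Lemma hPm_nz m : (hP ^+ m)%:F != 0.
Proof.
rewrite tofrac_eq0; apply/negP => /eqP h.
by have := hPm_eval m; rewrite h meval0 => /eqP; rewrite eq_sym oner_eq0.
Qed.

Lemma hPm_ndiv m : ~ (exists Q : {mpoly F[n]}, hP ^+ m = 'X_ix * Q).
Proof.
move=> [Q hQ]; have := hPm_eval m; rewrite hQ mevalM mevalXU mul0r => /eqP.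
by rewrite eq_sym oner_eq0.
Qed.

Lemma hPm_form m : exists Hm : {mpoly F[n]}, hP ^+ m = 1 + 'X_ix * Hm.
Proof.
elim: m => [|m [Hm IH]]; first by exists 0; rewrite expr0 mulr0 addr0.
exists (H1 + Hm + 'X_ix * H1 * Hm); rewrite exprS IH /hP; ring.
Qed.

Lemma good_decomp v : good v -> has_chart_decomp ix v.
Proof.
move=> [T [m ->]].
have [P [Q [HP ->]]] := mpoly_split T.
have [Hm eHm] := hPm_form m.
exists P, (Q - P * Hm), (hP ^+ m); split => //; split; first exact: hPm_ndiv.
have nz := hPm_nz m.
have e : (hP ^+ m)%:F = 1 + ('X_ix)%:F * Hm%:F :> K.
  by rewrite eHm rmorphD rmorph1 rmorphM.
rewrite e in nz *.
rewrite tofracD tofracM tofracB tofracM. exact: fld1.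
Qed.

Lemma good_poly T : good T%:F.
Proof. by exists T, 0%N; rewrite expr0 rmorph1 divr1. Qed.

Lemma good_add u v : good u -> good v -> good (u + v).
Proof.
move=> [T1 [m1 ->]] [T2 [m2 ->]].
exists (T1 * hP ^+ m2 + T2 * hP ^+ m1), (m1 + m2)%N.
have n1 := hPm_nz m1; have n2 := hPm_nz m2.
by rewrite (fld2 _ _ _ _ _ n1 n2) exprD tofracD !tofracM.
Qed.

Lemma good_mul u v : good u -> good v -> good (u * v).
Proof.
move=> [T1 [m1 ->]] [T2 [m2 ->]].
exists (T1 * T2), (m1 + m2)%N.
have n1 := hPm_nz m1; have n2 := hPm_nz m2.
by rewrite (fld3 _ _ _ _ _ n1 n2) exprD !tofracM.
Qed.

Lemma good_opp u : good u -> good (- u).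
Proof. by move=> [T [m ->]]; exists (- T), m; rewrite rmorphN mulNr. Qed.

Lemma good_hinv : good (hP%:F)^-1.
Proof. by exists 1, 1%N; rewrite rmorph1 expr1 div1r. Qed.

End Decomp.
Arguments good {F n}.
Arguments good_poly {F n}.
Arguments hPm_nz {F n}.
Arguments good_hinv {F n}.
Arguments good_add {F n ix H1}.
Arguments good_mul {F n ix H1}.
Arguments good_opp {F n ix H1}.
Arguments good_decomp {F n ix H1}.

Section Gen.
Variable K : fieldType.

Definition mx2 (a b c d : K) : 'M[K]_2 :=
  \matrix_(i, j) (if i == 0 then (if j == 0 then a else b) else (if j == 0 then c else d)).

Lemma ord2P (i : 'I_2) : i = 0 \/ i = 1.
Proof. by case: i => [[|[|//]] Hi]; [left|right]; apply/val_inj. Qed.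

Lemma mx2_mul a b c d a' b' c' d' :
  mx2 a b c d * mx2 a' b' c' d' =
  mx2 (a * a' + b * c') (a * b' + b * d') (c * a' + d * c') (c * b' + d * d').
Proof.
apply/matrixP => i j; rewrite -mulmxE !mxE !big_ord_recl big_ord0 !mxE addr0 /=.
by case: (ord2P i) => ->; case: (ord2P j) => ->.
Qed.

Lemma tr_mx2 a b c d : \tr (mx2 a b c d) = a + d.
Proof. by rewrite /mxtrace !big_ord_recl big_ord0 !mxE addr0. Qed.

Definition Dm (w : K) := mx2 w 0 0 1.
Definition Dim (w : K) := mx2 w^-1 0 0 1.
Definition Lm (f g t z : K) := mx2 1 0 (f - t * f * g - t * z) 1.
Definition M1m (g a2 z : K) := mx2 g 1 (z + a2) 0.
Definition M2m (f z : K) := mx2 (- f) 1 z 0.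
Definition M3m (f g a1 t z : K) := mx2 (t * z - g + t * f * g) 1 (z - a1) 0.

Lemma matrix_mx2 (E : 'I_2 -> 'I_2 -> K) :
  \matrix_(i, j) E i j = mx2 (E 0 0) (E 0 1) (E 1 0) (E 1 1).
Proof.
by apply/matrixP => i j; rewrite !mxE; case: (ord2P i) => ->; case: (ord2P j) => ->.
Qed.

Lemma o10 : ((1 : 'I_2) == 0) = false. Proof. by []. Qed.
Lemma o01 : ((0 : 'I_2) == 1) = false. Proof. by []. Qed.

Lemma Amat_eq w f g a1 a2 t z :
  Amat w f g a1 a2 t z =
  Dm w * (Lm f g t z * M1m g a2 z * M2m f z * M3m f g a1 t z) * Dim w.
Proof.
by rewrite /Amat /= !matrix_mx2 /= /Dm /Lm /M1m /M2m /M3m /Dim !mulrA.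
Qed.

Definition Cm f g a1 a2 t z := Lm f g t z * M1m g a2 z * M2m f z * M3m f g a1 t z.
Definition Bm f g a1 a2 t z := M2m f z * M3m f g a1 t z * Lm f g t (z - 1) * M1m g a2 (z - 1).

Definition zz (p i : nat) : K := (p.-1 - i)%N%:R.

Lemma prod_conj (D Di : 'M[K]_2) (F : nat -> 'M[K]_2) m :
  D * Di = 1 -> Di * D = 1 ->
  \prod_(i < m) (D * F i * Di) = D * (\prod_(i < m) F i) * Di.
Proof.
move=> h1 h2; elim: m => [|m IH]; first by rewrite !big_ord0 mulr1.
rewrite !big_ord_recr /= IH.
by rewrite -!mulrA; congr (_ * _); rewrite !mulrA; congr (_ * _ * _); rewrite -mulrA h2 mulr1.
Qed.

Lemma Ip_C p w f g a1 a2 t : w != 0 ->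
  Ip p w f g a1 a2 t = \tr (\prod_(i < p) Cm f g a1 a2 t (zz p i)).
Proof.
move=> nw; rewrite /Ip.
under eq_bigr => i _ do rewrite Amat_eq.
have h1 : Dm w * Dim w = 1.
  rewrite mx2_mul mulfV // !mul0r !mulr0 !addr0 !add0r mulr1.
  by apply/matrixP => i j; rewrite !mxE; case: (ord2P i) => ->; case: (ord2P j) => ->.
have h2 : Dim w * Dm w = 1.
  rewrite mx2_mul mulVf // !mul0r !mulr0 !addr0 !add0r mulr1.
  by apply/matrixP => i j; rewrite !mxE; case: (ord2P i) => ->; case: (ord2P j) => ->.
rewrite (prod_conj _ _ (fun i => Cm f g a1 a2 t (zz p i)) p h1 h2).
by rewrite -mulrA -!mulmxE mxtrace_mulC -mulmxA !mulmxE h2 mulr1.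
Qed.

Lemma prod_shift (P Q : nat -> 'M[K]_2) m :
  \prod_(i < m.+1) (P i * Q i) = P 0%N * (\prod_(i < m) (Q i * P i.+1)) * Q m.
Proof.
elim: m => [|m IH]; first by rewrite big_ord1 big_ord0 mulr1.
by rewrite big_ord_recr /= IH big_ord_recr /= !mulrA.
Qed.

Lemma tr3 (A X B : 'M[K]_2) : \tr (A * X * B) = \tr (X * (B * A)).
Proof. by rewrite -mulrA -mulmxE mxtrace_mulC mulmxE mulrA. Qed.

Lemma Ip_B p w f g a1 a2 t : w != 0 -> p \in [pchar K] ->
  Ip p w f g a1 a2 t = \tr (\prod_(i < p) Bm f g a1 a2 t (zz p i)).
Proof.
move=> nw hp; rewrite Ip_C //.
have p0 : (0 < p)%N by rewrite prime_gt0 // (pcharf_prime hp).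
have pR : p%:R = 0 :> K by apply/eqP; rewrite (pcharf0 hp).
case: p p0 hp pR => [//|m] _ hp pR.
pose P i := Lm f g t (zz m.+1 i) * M1m g a2 (zz m.+1 i).
pose Q i := M2m f (zz m.+1 i) * M3m f g a1 t (zz m.+1 i).
have -> : \prod_(i < m.+1) Cm f g a1 a2 t (zz m.+1 i) = \prod_(i < m.+1) (P i * Q i).
  by apply: eq_bigr => i _; rewrite /Cm /P /Q !mulrA.
rewrite prod_shift tr3.
rewrite [X in _ = \tr X]big_ord_recr /=.
have zS (i : nat) : (i < m)%N -> zz m.+1 i.+1 = zz m.+1 i - 1.
  move=> lt; rewrite /zz /= subnS.
  have : (0 < m - i)%N by rewrite subn_gt0.
  by case: (m - i)%N => [//|k] _; rewrite /= mulrSr addrK.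
have z0 : zz m.+1 0 = zz m.+1 m - 1.
  by rewrite /zz /= subn0 subnn sub0r; apply/eqP; rewrite -addr_eq0 -mulrSr pR.
congr (\tr (_ * _)).
  apply: eq_bigr => i _; rewrite /Bm /P /Q !mulrA zS //.
by rewrite /Bm /P /Q !mulrA z0.
Qed.

Lemma caseE2 (x y a1 a2 t z : K) : x != 0 ->
  Cm (x^-1) (x * (- a2 + x * y)) a1 a2 t z =
  mx2 (- (a2 ^+ 2 * t) + (z ^+ 2 * t) + (x * a2 ^+ 2) + (x * a1 * a2) + (2%:R * x * y * a2 * t) - (2%:R * x ^+ 2 * y * a2) - (x ^+ 2 * y * a1) - (x ^+ 2 * y ^+ 2 * t) + (x ^+ 3 * y ^+ 2))
      ((a2) + (z) - (x * y))
      (- (a2 ^+ 3 * t ^+ 2) + (z * a2 ^+ 2 * t ^+ 2) - (z * a1) + (z ^+ 2) + (z ^+ 2 * a2 * t ^+ 2) - (z ^+ 3 * t ^+ 2) + (y * a2 * t) - (y * z * t) + (x * a2 ^+ 3 * t) + (x * a1 * a2 ^+ 2 * t) - (x * z * a2 ^+ 2 * t) - (x * z * a1 * a2 * t) - (x * y * a2) + (3%:R * x * y * a2 ^+ 2 * t ^+ 2) - (x * y * a1) + (x * y * z) - (2%:R * x * y * z * a2 * t ^+ 2) - (x * y * z ^+ 2 * t ^+ 2) - (x * y ^+ 2 * t) - (3%:R * x ^+ 2 * y * a2 ^+ 2 * t) - (2%:R * x ^+ 2 * y * a1 * a2 * t) + (2%:R * x ^+ 2 * y * z * a2 * t) + (x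 ^+ 2 * y * z * a1 * t) + (x ^+ 2 * y ^+ 2) - (3%:R * x ^+ 2 * y ^+ 2 * a2 * t ^+ 2) + (x ^+ 2 * y ^+ 2 * z * t ^+ 2) + (3%:R * x ^+ 3 * y ^+ 2 * a2 * t) + (x ^+ 3 * y ^+ 2 * a1 * t) - (x ^+ 3 * y ^+ 2 * z * t) + (x ^+ 3 * y ^+ 3 * t ^+ 2) - (x ^+ 4 * y ^+ 3 * t))
      ((a2 ^+ 2 * t) - (z ^+ 2 * t) - (y) - (2%:R * x * y * a2 * t) + (x ^+ 2 * y ^+ 2 * t)).
Proof.
move=> nx; rewrite /Cm /Lm /M1m /M2m /M3m !mx2_mul.
congr mx2; field; exact: nx.
Qed.

Lemma caseE4 (x y a1 a2 t z : K) : x != 0 ->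
  Cm (x * (a1 + x * y)) (x^-1) a1 a2 t z =
  mx2 (- (a1 ^+ 2 * t) + (z ^+ 2 * t) + (y) - (2%:R * x * y * a1 * t) - (x ^+ 2 * y ^+ 2 * t))
      (- (a1) + (z) - (x * y))
      ((a1 ^+ 3 * t ^+ 2) + (z * a2) + (z * a1 ^+ 2 * t ^+ 2) + (z ^+ 2) - (z ^+ 2 * a1 * t ^+ 2) - (z ^+ 3 * t ^+ 2) - (y * a1 * t) - (y * z * t) - (x * a1 ^+ 2 * a2 * t) - (x * a1 ^+ 3 * t) - (x * z * a1 * a2 * t) - (x * z * a1 ^+ 2 * t) + (x * y * a2) + (x * y * a1) + (3%:R * x * y * a1 ^+ 2 * t ^+ 2) + (x * y * z) + (2%:R * x * y * z * a1 * t ^+ 2) - (x * y * z ^+ 2 * t ^+ 2) - (x * y ^+ 2 * t) - (2%:R * x ^+ 2 * y * a1 * a2 * t) - (3%:R * x ^+ 2 * y * a1 ^+ 2 * t) - (x ^+ 2 * y * z * a2 * t) - (2%:R * x ^+ 2 * y * z * a1 * t) + (x ^+ 2 * y ^+ 2) + (3%:R * x ^+ 2 * y ^+ 2 * a1 * t ^+ 2) + (x ^+ 2 * y ^+ 2 * z * t ^+ 2) - (x ^+ 3 * y ^+ 2 * a2 * t) - (3%:R * x ^+ 3 * y ^+ 2 * a1 * t) - (x ^+ 3 * y ^+ 2 * z * t) + (x ^+ 3 * y ^+ 3 * t ^+ 2) - (x ^+ 4 * y ^+ 3 * t))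
      ((a1 ^+ 2 * t) - (z ^+ 2 * t) - (x * a1 * a2) - (x * a1 ^+ 2) + (2%:R * x * y * a1 * t) - (x ^+ 2 * y * a2) - (2%:R * x ^+ 2 * y * a1) + (x ^+ 2 * y ^+ 2 * t) - (x ^+ 3 * y ^+ 2)).
Proof.
move=> nx; rewrite /Cm /Lm /M1m /M2m /M3m !mx2_mul.
congr mx2; field; exact: nx.
Qed.

Lemma caseE8 (x y a1 a2 t z : K) :
  let h := 1 + x * (- t + (t ^+ 2 + 1 - a1 - a2) * x + y * x ^+ 2) in
  let hi := h^-1 in
  x != 0 -> h != 0 ->
  Bm (x^-1) ((x * (1 - t * x + (t ^+ 2 + 1 - a1 - a2) * x ^+ 2 + y * x ^+ 3))^-1) a1 a2 t z =
  mx2 ((- (3%:R * t) - (t ^+ 3) + (3%:R * a2 * t) + (2%:R * a1 * t) + (z * t) - (y) + (2%:R * x) + (3%:R * x * t ^+ 2) - (4%:R * x * a2) - (3%:R * x * a2 * t ^+ 2) + (2%:R * x * a2 ^+ 2) - (3%:R * x * a1) - (x * a1 * t ^+ 2) + (3%:R * x * a1 * a2) + (x * a1 ^+ 2) - (x * z) - (2%:R * x * z * t ^+ 2) + (x * z * a2) + (x * z * a1) - (x * y * t) - (2%:R * x ^+ 2 * t) - (2%:R * x ^+ 2 * t ^+ 3) + (4%:R * x ^+ 2 * a2 * t) + (2%:R * x ^+ 2 * a2 * t ^+ 3) - (2%:R * x ^+ 2 * a2 ^+ 2 * t) + (2%:R * x ^+ 2 * a1 * t) - (2%:R * x ^+ 2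 * a1 * a2 * t) + (2%:R * x ^+ 2 * z * t) + (2%:R * x ^+ 2 * z * t ^+ 3) - (2%:R * x ^+ 2 * z * a2 * t) - (2%:R * x ^+ 2 * z * a1 * t) + (2%:R * x ^+ 2 * y) - (2%:R * x ^+ 2 * y * a2) - (x ^+ 2 * y * a1) - (x ^+ 2 * y * z) + (x ^+ 3) + (2%:R * x ^+ 3 * t ^+ 2) + (x ^+ 3 * t ^+ 4) - (3%:R * x ^+ 3 * a2) - (4%:R * x ^+ 3 * a2 * t ^+ 2) - (x ^+ 3 * a2 * t ^+ 4) + (3%:R * x ^+ 3 * a2 ^+ 2) + (2%:R * x ^+ 3 * a2 ^+ 2 * t ^+ 2) - (x ^+ 3 * a2 ^+ 3) - (2%:R * x ^+ 3 * a1) - (2%:R * x ^+ 3 * a1 * t ^+ 2) + (4%:R * x ^+ 3 * a1 * a2) + (2%:R * x ^+ 3 * a1 * a2 * t ^+ 2) - (2%:R * x ^+ 3 * a1 * a2 ^+ 2) + (x ^+ 3 * a1 ^+ 2) - (x ^+ 3 * a1 ^+ 2 * a2) - (x ^+ 3 * z) - (2%:R * x ^+ 3 * z * t ^+ 2) - (x ^+ 3 * z * t ^+ 4) + (2%:R * x ^+ 3 * z * a2) + (2%:R * x ^+ 3 * z * a2 * t ^+ 2) - (x ^+ 3 * z * a2 ^+ 2) + (2%:R * x ^+ 3 * z * a1) + (2%:R * x ^+ 3 * z * a1 * t ^+ 2) - (2%:R * x ^+ 3 * z * a1 * a2) - (x ^+ 3 * z * a1 ^+ 2) - (2%:R * x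 ^+ 3 * y * t) + (2%:R * x ^+ 3 * y * a2 * t) + (2%:R * x ^+ 3 * y * z * t) + (2%:R * x ^+ 4 * y) + (2%:R * x ^+ 4 * y * t ^+ 2) - (4%:R * x ^+ 4 * y * a2) - (2%:R * x ^+ 4 * y * a2 * t ^+ 2) + (2%:R * x ^+ 4 * y * a2 ^+ 2) - (2%:R * x ^+ 4 * y * a1) + (2%:R * x ^+ 4 * y * a1 * a2) - (2%:R * x ^+ 4 * y * z) - (2%:R * x ^+ 4 * y * z * t ^+ 2) + (2%:R * x ^+ 4 * y * z * a2) + (2%:R * x ^+ 4 * y * z * a1) + (x ^+ 5 * y ^+ 2) - (x ^+ 5 * y ^+ 2 * a2) - (x ^+ 5 * y ^+ 2 * z)) * hi ^+ 2)
      ((- (1%:R) + (a2) + (z) - (x * t) - (x * t ^+ 3) + (x * a2 * t) + (2%:R * x * a1 * t) - (x * z * t) - (x * y) - (x ^+ 2 * a1) - (x ^+ 2 * a1 * t ^+ 2) + (x ^+ 2 * a1 * a2) + (x ^+ 2 * a1 ^+ 2) + (x ^+ 2 * z) + (x ^+ 2 * z * t ^+ 2) - (x ^+ 2 * z * a2) - (x ^+ 2 * z * a1) - (x ^+ 2 * y * t) - (x ^+ 3 * y * a1) + (x ^+ 3 * y * z)) * hi)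
      ((- (z * a1) + (z ^+ 2) + (3%:R * x * z * t) + (x * z * t ^+ 3) - (3%:R * x * z * a2 * t) - (x * z * a1 * t) - (2%:R * x * z ^+ 2 * t) + (x * y * z) - (2%:R * x ^+ 2 * z) - (3%:R * x ^+ 2 * z * t ^+ 2) + (4%:R * x ^+ 2 * z * a2) + (3%:R * x ^+ 2 * z * a2 * t ^+ 2) - (2%:R * x ^+ 2 * z * a2 ^+ 2) + (2%:R * x ^+ 2 * z * a1) - (2%:R * x ^+ 2 * z * a1 * a2) + (2%:R * x ^+ 2 * z ^+ 2) + (3%:R * x ^+ 2 * z ^+ 2 * t ^+ 2) - (2%:R * x ^+ 2 * z ^+ 2 * a2) - (2%:R * x ^+ 2 * z ^+ 2 * a1) + (x ^+ 2 * y * z * t) + (2%:R * x ^+ 3 * z * t) + (2%:R * x ^+ 3 * z * t ^+ 3) - (4%:R * x ^+ 3 * z * a2 * t) - (2%:R * x ^+ 3 * z * a2 * t ^+ 3) + (2%:R * x ^+ 3 * z * a2 ^+ 2 * t) - (2%:R * x ^+ 3 * z * a1 * t) + (2%:R * x ^+ 3 * z * a1 * a2 * t) - (2%:R * x ^+ 3 * z ^+ 2 * t) - (2%:R * x ^+ 3 * z ^+ 2 * t ^+ 3) + (2%:R * x ^+ 3 * z ^+ 2 * a2 * t) + (2%:R * x ^+ 3 * z ^+ 2 * a1 * t) - (2%:R * x ^+ 3 * y * z) + (2%:R * x ^+ 3 * y * z * a2) + (2%:R * x ^+ 3 * y * z ^+ 2) - (x ^+ 4 * z) - (2%:R * x ^+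 4 * z * t ^+ 2) - (x ^+ 4 * z * t ^+ 4) + (3%:R * x ^+ 4 * z * a2) + (4%:R * x ^+ 4 * z * a2 * t ^+ 2) + (x ^+ 4 * z * a2 * t ^+ 4) - (3%:R * x ^+ 4 * z * a2 ^+ 2) - (2%:R * x ^+ 4 * z * a2 ^+ 2 * t ^+ 2) + (x ^+ 4 * z * a2 ^+ 3) + (2%:R * x ^+ 4 * z * a1) + (2%:R * x ^+ 4 * z * a1 * t ^+ 2) - (4%:R * x ^+ 4 * z * a1 * a2) - (2%:R * x ^+ 4 * z * a1 * a2 * t ^+ 2) + (2%:R * x ^+ 4 * z * a1 * a2 ^+ 2) - (x ^+ 4 * z * a1 ^+ 2) + (x ^+ 4 * z * a1 ^+ 2 * a2) + (x ^+ 4 * z ^+ 2) + (2%:R * x ^+ 4 * z ^+ 2 * t ^+ 2) + (x ^+ 4 * z ^+ 2 * t ^+ 4) - (2%:R * x ^+ 4 * z ^+ 2 * a2) - (2%:R * x ^+ 4 * z ^+ 2 * a2 * t ^+ 2) + (x ^+ 4 * z ^+ 2 * a2 ^+ 2) - (2%:R * x ^+ 4 * z ^+ 2 * a1) - (2%:R * x ^+ 4 * z ^+ 2 * a1 * t ^+ 2) + (2%:R * x ^+ 4 * z ^+ 2 * a1 * a2) + (x ^+ 4 * z ^+ 2 * a1 ^+ 2) + (2%:R * x ^+ 4 * y * z * t) - (2%:R * x ^+ 4 * y * z * a2 * t) - (2%:R * x ^+ 4 * y * z ^+ 2 * t) - (2%:R * x ^+ 5 * y * z) - (2%:R * x ^+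 5 * y * z * t ^+ 2) + (4%:R * x ^+ 5 * y * z * a2) + (2%:R * x ^+ 5 * y * z * a2 * t ^+ 2) - (2%:R * x ^+ 5 * y * z * a2 ^+ 2) + (2%:R * x ^+ 5 * y * z * a1) - (2%:R * x ^+ 5 * y * z * a1 * a2) + (2%:R * x ^+ 5 * y * z ^+ 2) + (2%:R * x ^+ 5 * y * z ^+ 2 * t ^+ 2) - (2%:R * x ^+ 5 * y * z ^+ 2 * a2) - (2%:R * x ^+ 5 * y * z ^+ 2 * a1) - (x ^+ 6 * y ^+ 2 * z) + (x ^+ 6 * y ^+ 2 * z * a2) + (x ^+ 6 * y ^+ 2 * z ^+ 2)) * hi ^+ 2)
      (((x * z) - (x * z * a2) - (x * z * a1) + (x ^+ 2 * z * t) + (x ^+ 2 * z * t ^+ 3) - (x ^+ 2 * z * a2 * t) - (x ^+ 2 * z * a1 * t) + (x ^+ 2 * y * z) + (x ^+ 3 * y * z * t)) * hi).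
Proof.
move=> h hi nx nh; rewrite /Bm /Lm /M1m /M2m /M3m !mx2_mul.
have nh' : 1 - t * x + (t ^+ 2 + 1 - a1 - a2) * x ^+ 2 + y * x ^+ 3 != 0.
  by move: nh; rewrite /h; congr (_ != _); ring.
congr mx2; rewrite /hi /h; field; by apply/andP; split.
Qed.

End Gen.
Arguments mx2 {K}.
Arguments Ip_C {K}.
Arguments Ip_B {K}.
Arguments caseE2 {K}.
Arguments caseE4 {K}.
Arguments caseE8 {K}.
Arguments zz {K}.
Arguments Cm {K}.
Arguments Bm {K}.

Lemma chK (F : fieldType) n p : p \in [pchar F] -> p \in [pchar {fraction {mpoly F[n]}}].
Proof.
move=> hp; rewrite !inE (pcharf_prime hp) /=.
rewrite -(rmorph_nat (@FracField.tofrac _)) -(rmorph_nat (@mpolyC n F)) (pcharf0 hp).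
by rewrite (rmorph0 (@mpolyC n F)) rmorph0.
Qed.

Lemma Xnz (F : fieldType) n (i : 'I_n) : (('X_i : {mpoly F[n]})%:F) != 0.
Proof.
rewrite tofrac_eq0; apply/negP => /eqP h.
have := mevalXU (fun _ => (1 : F)) i; rewrite h meval0 => /eqP.
by rewrite eq_sym oner_eq0.
Qed.

Section Good2.
Variables (F : fieldType) (n : nat) (ix : 'I_n) (H1 : {mpoly F[n]}).
Local Notation K := {fraction {mpoly F[n]}}.
Local Notation gd := (good ix H1).

Lemma good0 : gd 0.
Proof. by have := good_poly ix H1 0; rewrite rmorph0. Qed.
Lemma good1 : gd 1.
Proof. by have := good_poly ix H1 1; rewrite rmorph1. Qed.
Lemma good_nat k : gd k%:R.
Proof. elim: k => [|k IH]; [exact: good0 | rewrite mulrS; exact: good_add good1 IH]. Qed.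
Lemma good_exp v k : gd v -> gd (v ^+ k).
Proof.
move=> hv; elim: k => [|k IH]; [rewrite expr0; exact: good1 | rewrite exprS; exact: good_mul].
Qed.
Lemma good_hinv' v : v = (1 + 'X_ix * H1)%:F -> gd v^-1.
Proof. move=> ->; exact: good_hinv. Qed.

Definition goodM (M : 'M[K]_2) := forall i j, gd (M i j).

Lemma goodM1 : goodM 1.
Proof. move=> i j; rewrite mxE; case: (i == j); [exact: good1 | exact: good0]. Qed.

Lemma goodM_mul A B : goodM A -> goodM B -> goodM (A * B).
Proof.
move=> hA hB i j; rewrite -mulmxE mxE.
apply: (big_ind gd good0 good_add) => k _; exact: good_mul.
Qed.

Lemma goodM_mx2 a b c d : gd a -> gd b -> gd c -> gd d -> goodM (mx2 a b c d).
Proof.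
move=> ha hb hc hd i j; rewrite mxE.
by case: (ord2P i) => ->; case: (ord2P j) => ->.
Qed.

Lemma good_trprod m (M : 'I_m -> 'M[K]_2) : (forall i, goodM (M i)) -> gd (\tr (\prod_(i < m) M i)).
Proof.
move=> hM; have hP : goodM (\prod_(i < m) M i).
  by apply: (big_ind goodM goodM1 goodM_mul) => i _; exact: hM.
rewrite /mxtrace; apply: (big_ind gd good0 good_add) => i _; exact: hP.
Qed.

End Good2.

Ltac gsolve :=
  repeat match goal with
  | |- good _ _ (_ + _) => apply: good_add
  | |- good _ _ (- _) => apply: good_opp
  | |- good _ _ (_ * _) => apply: good_mul
  | |- good _ _ (_ ^+ _) => apply: good_exp
  | |- good _ _ (_ %:R) => apply: good_nat
  | |- good _ _ (zz _ _) => apply: good_nat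
  | |- good _ _ (FracField.tofrac _) => apply: good_poly
  | |- good _ _ (_^-1) => apply: good_hinv'
  end.

Section Assemble.
Variables (F : fieldType) (n : nat) (ix : 'I_n) (Y A1 A2 T : {mpoly F[n]}) (p : nat).
Hypothesis hp : p \in [pchar F].
Local Notation K := {fraction {mpoly F[n]}}.

Lemma assE8 (w : K) : w != 0 ->
  let fg := chart_subst E8 ('X_ix)%:F Y%:F A1%:F A2%:F T%:F in
  has_chart_decomp ix (Ip p w fg.1 fg.2 A1%:F A2%:F T%:F).
Proof.
move=> nw fg; rewrite /fg /=.
have nx := Xnz F n ix.
pose H1 := - T + (T ^+ 2 + 1 - A1 - A2) * 'X_ix + Y * 'X_ix ^+ 2.
have eh : 1 + ('X_ix)%:F * (- T%:F + (T%:F ^+ 2 + 1 - A1%:F - A2%:F) * ('X_ix)%:F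
            + Y%:F * ('X_ix)%:F ^+ 2) = (1 + 'X_ix * H1)%:F.
  by rewrite /H1 !(tofracD, tofracM, tofracN, tofracB, tofracXn, tofrac1).
have nh : 1 + ('X_ix)%:F * (- T%:F + (T%:F ^+ 2 + 1 - A1%:F - A2%:F) * ('X_ix)%:F
            + Y%:F * ('X_ix)%:F ^+ 2) != 0.
  by rewrite eh; have := hPm_nz ix H1 1; rewrite expr1.
apply: (good_decomp (H1 := H1)).
rewrite Ip_B //; last exact: chK.
under eq_bigr => i _ do rewrite (caseE8 _ _ _ _ _ _ nx nh).
apply: good_trprod => i; apply: goodM_mx2; gsolve.
all: exact: eh.
Qed.

Lemma assE2 (w : K) : w != 0 ->
  let fg := chart_subst E2 ('X_ix)%:F Y%:F A1%:F A2%:F T%:F in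
  has_chart_decomp ix (Ip p w fg.1 fg.2 A1%:F A2%:F T%:F).
Proof.
move=> nw fg; rewrite /fg /=.
have nx := Xnz F n ix.
apply: (good_decomp (H1 := 0)).
rewrite Ip_C //.
under eq_bigr => i _ do rewrite (caseE2 _ _ _ _ _ _ nx).
apply: good_trprod => i; apply: goodM_mx2; gsolve.
Qed.

Lemma assE4 (w : K) : w != 0 ->
  let fg := chart_subst E4 ('X_ix)%:F Y%:F A1%:F A2%:F T%:F in
  has_chart_decomp ix (Ip p w fg.1 fg.2 A1%:F A2%:F T%:F).
Proof.
move=> nw fg; rewrite /fg /=.
have nx := Xnz F n ix.
apply: (good_decomp (H1 := 0)).
rewrite Ip_C //.
under eq_bigr => i _ do rewrite (caseE4 _ _ _ _ _ _ nx).
apply: good_trprod => i; apply: goodM_mx2; gsolve.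
Qed.
End Assemble.

Theorem theorem4p2 (p : nat) (hp : prime p) :
  (forall (j : exc_line) (w : ratfun 'F_p 5), w != 0 ->
    let V (i : 'I_5) : ratfun 'F_p 5 := ('X_i)%:F in
    let fg := chart_subst j (V 0) (V 1) (V 2) (V 3) (V 4) in
    has_chart_decomp (0 : 'I_5)
      (Ip p w fg.1 fg.2 (V 2) (V 3) (V 4)))
  /\
  (forall (k : fieldType), p \in [pchar k] ->
   forall (t a1 a2 : k) (j : exc_line) (w : ratfun k 2), w != 0 ->
    let V (i : 'I_2) : ratfun k 2 := ('X_i)%:F in
    let C (c : k) : ratfun k 2 := (c%:MP)%:F in
    let fg := chart_subst j (V 0) (V 1) (C a1) (C a2) (C t) in
    has_chart_decomp (0 : 'I_2)
      (Ip p w fg.1 fg.2 (C a1) (C a2) (C t))).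
Proof.
split.
  move=> j w nw; have hF := pchar_Fp hp.
  case: j.
  - exact: (@assE2 'F_p 5 0 'X_1 'X_2 'X_3 'X_4 p w nw).
  - exact: (@assE4 'F_p 5 0 'X_1 'X_2 'X_3 'X_4 p w nw).
  - exact: (@assE8 'F_p 5 0 'X_1 'X_2 'X_3 'X_4 p hF w nw).
move=> k hk t a1 a2 j w nw.
case: j.
- exact: (@assE2 k 2 0 'X_1 a1%:MP a2%:MP t%:MP p w nw).
- exact: (@assE4 k 2 0 'X_1 a1%:MP a2%:MP t%:MP p w nw).
- exact: (@assE8 k 2 0 'X_1 a1%:MP a2%:MP t%:MP p hk w nw).
Qed.
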